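(* Let $W$ be a graphon on a probability space $J=(\Omega,\mathcal A,\mu)$ and let $(\nu_x)_{x\in J}$, $\nu_x=W(x,\cdot)\,d\mu$, be the associated graphop. Then: every graphon automorphism of $W$ is a graphop automorphism of $(\nu_x)$; a graphop automorphism $\varphi$ of $(\nu_x)$ is a graphon automorphism of $W$ if and only if it preserves $\mu$; in particular, the graphon-induced symmetries are exactly the graphop-induced symmetries that are isometries of $L^1(J)$.
   Context: A graphon is a symmetric measurable $W:\Omega\times\Omega\to[0,1]$. A graphon automorphism is an invertible measure preserving $\varphi:J\to J$ with $W(\varphi(x),\varphi(y))=W(x,y)$ for every $x$ and almost every $y$. A graphop automorphism of a graphop with fiber measures $(\nu_x)$ is a measurable bijection $\varphi$ with $\varphi\#\nu_x=\nu_{\varphi(x)}$ for every $x$. The graphon-induced (resp. graphop-induced) symmetry associated to a graphon (resp. graphop) automorphism $\varphi$ is the map $\varphi^*:L^1(J)\to L^1(J)$, $u\mapsto u\circ\varphi$. *)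

(* Defs.v *)
From HB Require Import structures.
From mathcomp Require Import all_boot all_order all_algebra.
From mathcomp Require Import all_classical all_reals all_analysis.
Set Implicit Arguments. Unset Strict Implicit. Unset Printing Implicit Defensive.
Import Order.TTheory GRing.Theory Num.Theory.
Local Open Scope classical_set_scope.
Local Open Scope ring_scope.

Section Graphon.
Context (d : measure_display) (T : measurableType d) (R : realType)
        (mu : probability T R).

Definition is_graphon (W : T -> T -> R) : Prop :=
  [/\ measurable_fun setT (fun p : T * T => W p.1 p.2),
      (forall x y, W x y = W y x) &
      (forall x y, 0 <= W x y <= 1)].

Definition graphop_nu (W : T -> T -> R) (x : T) (A : set T) : \bar R :=
  (\int[mu]_(y in A) (W x y)%:E)%E.

Definition measurable_bijection (phi : T -> T) : Prop :=
  exists psi : T -> T,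
    [/\ measurable_fun setT phi, measurable_fun setT psi,
        cancel phi psi & cancel psi phi].

Definition measure_preserving (phi : T -> T) : Prop :=
  forall A, measurable A -> mu (phi @^-1` A) = mu A.

Definition graphon_automorphism (W : T -> T -> R) (phi : T -> T) : Prop :=
  [/\ measurable_bijection phi, measure_preserving phi &
      forall x, {ae mu, forall y, W (phi x) (phi y) = W x y}].

Definition graphop_automorphism (W : T -> T -> R) (phi : T -> T) : Prop :=
  measurable_bijection phi /\
  forall x A, measurable A ->
    graphop_nu W x (phi @^-1` A) = graphop_nu W (phi x) A.

(* elements of L^1(J) are represented by integrable functions T -> R *)
Definition L1fun (u : T -> R) : Prop := mu.-integrable setT (EFin \o u).

Definition L1_isometry (phi : T -> T) : Prop :=
  forall u, L1fun u ->
    L1fun (u \o phi) /\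
    (\int[mu]_x `|u (phi x)|%:E = \int[mu]_x `|u x|%:E)%E.

(* phi^* and psi^* coincide as maps on L^1(J) (equality a.e. of images) *)
Definition same_symmetry (phi psi : T -> T) : Prop :=
  forall u, L1fun u -> {ae mu, forall x, u (phi x) = u (psi x)}.

End Graphon.

(* Main.v *)
Require Import Defs.
From HB Require Import structures.
From mathcomp Require Import all_boot all_order all_algebra.
From mathcomp Require Import all_classical all_reals all_analysis.
From mathcomp Require Import lebesgue_measure measurable_realfun.
Import Order.TTheory GRing.Theory Num.Theory.
Local Open Scope classical_set_scope.
Local Open Scope ring_scope.

Lemma mp_ge0 d (T : measurableType d) (R : realType) (mu : probability T R)
  (phi : T -> T) (mphi : measurable_fun setT phi) (mp : measure_preserving mu phi)
  (D : set T) (f : T -> \bar R) : measurable D -> measurable_fun D f ->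
  (forall y, D y -> (0 <= f y)%E) ->
  (\int[mu]_(x in phi @^-1` D) f (phi x) = \int[mu]_(y in D) f y)%E.
Proof.
move=> mD mf f0.
rewrite -(ge0_integral_pushforward mphi)//; last by move=> y; rewrite inE; exact: f0.
apply: eq_measure_integral => A mA _ /=.
exact: mp.
Qed.

Lemma W_int d (T : measurableType d) (R : realType) (mu : probability T R)
  (W : T -> T -> R) : is_graphon W -> forall x, mu.-integrable setT (EFin \o W x).
Proof.
case=> mW _ W01 x; apply/integrableP; split.
  apply/measurable_EFinP; exact: (measurableT_comp mW (pair1_measurable x)).
apply: (@le_lt_trans _ _ (\int[mu]_(y in setT) (cst 1%:E) y)%E).
  apply: ge0_le_integral => //.
  - by apply/measurable_EFinP; apply: measurableT_comp => //; exact: (measurableT_comp mW (pair1_measurable x)).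
  - by move=> y _; rewrite /= lee_fin ger0_norm; case/andP: (W01 x y).
rewrite integral_cst//.
rewrite mul1e; apply: (le_lt_trans (probability_le1 mu measurableT)); exact: ltry.
Qed.

Section P.
Context (d : measure_display) (T : measurableType d) (R : realType)
    (mu : probability T R) (W : T -> T -> R).

Lemma part1 phi : is_graphon W -> graphon_automorphism mu W phi ->
  graphop_automorphism mu W phi.
Proof.
move=> gW [[psi [mphi mpsi phiK psiK]] mp hae]; split; first by exists psi; split.
have [mW _ W01] := gW.
have mWx z : measurable_fun setT (W z) := measurableT_comp mW (pair1_measurable z).
move=> x A mA; rewrite /graphop_nu.
have mphiA : measurable (phi @^-1` A) by have := mphi measurableT A mA; rewrite setTI.
transitivity (\int[mu]_(y in phi @^-1` A) (W (phi x) (phi y))%:E)%E.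
  apply: ae_eq_integral => //.
  - by apply: measurable_funTS; apply/measurable_EFinP.
  - by apply: measurable_funTS; apply/measurable_EFinP; exact: measurableT_comp.
  - by apply: filterS (hae x) => y /= h _; rewrite h.
apply: (@mp_ge0 _ _ _ mu phi mphi mp A (fun y => (W (phi x) y)%:E) mA).
  by apply: measurable_funTS; apply/measurable_EFinP.
by move=> y _; rewrite lee_fin; case/andP: (W01 (phi x) y).
Qed.

Lemma part2 phi : is_graphon W -> graphop_automorphism mu W phi ->
  measure_preserving mu phi -> graphon_automorphism mu W phi.
Proof.
move=> gW [hb hnu] mp; split => // x.
have [mW _ W01] := gW.
have mWx z : measurable_fun setT (W z) := measurableT_comp mW (pair1_measurable z).
case: (hb) => psi [mphi mpsi phiK psiK].
have mg : measurable_fun setT (fun y => (W (phi x) (phi y))%:E).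
  by apply/measurable_EFinP; exact: measurableT_comp.
have hc : forall E, E `<=` setT -> measurable E ->
    (\int[mu]_(y in E) (EFin \o W x) y = \int[mu]_(y in E) (W (phi x) (phi y))%:E)%E.
  move=> E _ mE.
  have mpE : measurable (psi @^-1` E) by have := mpsi measurableT E mE; rewrite setTI.
  have hE : phi @^-1` (psi @^-1` E) = E.
    by rewrite predeqE => y; rewrite /preimage /= phiK.
  have := hnu x _ mpE; rewrite /graphop_nu hE /= => ->.
  rewrite -[in RHS]hE.
  symmetry.
  apply: (@mp_ge0 _ _ _ mu phi mphi mp _ (fun y => (W (phi x) y)%:E) mpE).
    by apply: measurable_funTS; apply/measurable_EFinP.
  by move=> y _; rewrite lee_fin; case/andP: (W01 (phi x) y).
have h := @integral_ae_eq _ _ _ mu setT measurableT (fun y => (W (phi x) (phi y))%:E)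
  (EFin \o W x) (@W_int _ _ _ mu W gW x) mg hc.
by apply: filterS h => y /(_ I) /= [->].
Qed.

Lemma iso phi : measurable_fun setT phi -> measure_preserving mu phi ->
  L1_isometry mu phi.
Proof.
move=> mphi mp u /[dup] ui /integrableP [mu' fin].
have mu1 : measurable_fun setT u by apply/measurable_EFinP.
have eq : (\int[mu]_x `|u (phi x)|%:E = \int[mu]_x `|u x|%:E)%E.
  have := @mp_ge0 _ _ _ mu phi mphi mp setT (fun y => (`|u y|)%:E) measurableT.
  rewrite preimage_setT; apply.
    by apply/measurable_EFinP; apply: measurableT_comp => //; exact: normr_measurable.
  by move=> y _; rewrite lee_fin.
split; last exact: eq.
apply/integrableP; split.
  exact: (measurableT_comp mu' mphi).
have fin' : (\int[mu]_x `|u x|%:E < +oo)%E := fin.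
rewrite -eq in fin'; exact: fin'.
Qed.

Lemma iso_mp phi : measurable_fun setT phi -> L1_isometry mu phi ->
  measure_preserving mu phi.
Proof.
move=> mphi hi A mA.
have mphiA : measurable (phi @^-1` A) by have := mphi measurableT A mA; rewrite setTI.
have ui : L1fun mu (\1_A : T -> R) by exact: integrable_indic.
have [_ h] := hi _ ui.
have e1 : (fun x => (`|(\1_A : T -> R) (phi x)|)%:E) = (fun x => ((\1_(phi @^-1` A) : T -> R) x)%:E).
  by apply/funext => x; rewrite ger0_norm.
have e2 : (fun x => (`|(\1_A : T -> R) x|)%:E) = (fun x => ((\1_A : T -> R) x)%:E).
  by apply/funext => x; rewrite ger0_norm.
move: h; rewrite e1 e2 !integral_indic // !setIT.
by [].
Qed.
End P.

Theorem lemma8p3 (d : measure_display) (T : measurableType d) (R : realType)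
    (mu : probability T R) (W : T -> T -> R) :
  is_graphon W ->
  [/\ (forall phi, graphon_automorphism mu W phi -> graphop_automorphism mu W phi),
      (forall phi, graphop_automorphism mu W phi ->
         (graphon_automorphism mu W phi <-> measure_preserving mu phi)) &
      ((forall phi, graphon_automorphism mu W phi ->
          exists psi, [/\ graphop_automorphism mu W psi, L1_isometry mu psi &
                          same_symmetry mu phi psi]) /\
       (forall phi, graphop_automorphism mu W phi -> L1_isometry mu phi ->
          exists psi, graphon_automorphism mu W psi /\ same_symmetry mu phi psi))].
Proof.
move=> gW; split.
- by move=> phi; exact: part1.
- move=> phi hop; split; first by case.
  exact: part2.
- split.
  + move=> phi ha; exists phi; split; [exact: part1 | | by move=> u _; apply: aeW].
    case: ha => [[psi [mphi _ _ _]] mp _]; exact: iso.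
  + move=> phi hop hi; exists phi; split; last by move=> u _; apply: aeW.
    apply: part2 => //; apply: iso_mp => //.
    by case: hop => [[psi [mphi _ _ _]] _].
Qed.
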